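(* Let $p \geq 1$. Let the coordinates of $\mathbb{R}^d$ be partitioned into $L$ groups, so that every $\mathbf{x} \in \mathbb{R}^d$ is written $\mathbf{x} = ({\mathbf{x}^{(1)}}^\top, \ldots, {\mathbf{x}^{(L)}}^\top)^\top$ with $\mathbf{x}^{(\ell)} \in \mathbb{R}^{d_\ell}$ and $\sum_{\ell=1}^L d_\ell = d$, and let $d(\cdot,\cdot)$ be a distance function (metric) applied to each group. For discrete probability measures $\mu = \sum_{i=1}^n a_i \delta_{\mathbf{x}_i}$ and $\nu = \sum_{j=1}^m b_j \delta_{\mathbf{y}_j}$ on $\mathbb{R}^d$ define $$\mathrm{FRWD}_p(\mu,\nu) = \left( \min_{\boldsymbol{\Pi} \in U(\mu,\nu)} \max_{\boldsymbol{\alpha} \in \Sigma^L} \sum_{i=1}^n \sum_{j=1}^m \pi_{ij} \sum_{\ell=1}^L \alpha_\ell\, d(\mathbf{x}_i^{(\ell)}, \mathbf{y}_j^{(\ell)})^p \right)^{1/p}.$$ Then $\mathrm{FRWD}_p$ is a distance (on discrete probability measures on $\mathbb{R}^d$).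
   Context: $U(\mu,\nu) = \{\boldsymbol{\Pi} \in \mathbb{R}_+^{n\times m} : \boldsymbol{\Pi}\mathbf{1}_m = \mathbf{a},\ \boldsymbol{\Pi}^\top \mathbf{1}_n = \mathbf{b}\}$ is the set of transport plans, where $\mathbf{a}=(a_1,\dots,a_n)^\top \in \mathbb{R}_+^n$ and $\mathbf{b}=(b_1,\dots,b_m)^\top\in\mathbb{R}_+^m$ are the weight vectors of $\mu$ and $\nu$. $\Sigma^L = \{\boldsymbol{\alpha} \in \mathbb{R}_+^L : \boldsymbol{\alpha}^\top \mathbf{1}_L = 1\}$ is the probability simplex. ''Distance'' means symmetric, nonnegative, zero exactly when $\mu=\nu$, and satisfying the triangle inequality. *)

(* Defs.v *)
From HB Require Import structures.
From mathcomp Require Import all_boot all_order all_algebra.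
From mathcomp Require Import all_classical all_reals all_analysis.
Set Implicit Arguments. Unset Strict Implicit. Unset Printing Implicit Defensive.
Import Order.TTheory GRing.Theory Num.Theory.
Local Open Scope classical_set_scope.
Local Open Scope ring_scope.

Definition is_metric (R : realType) (T : Type) (f : T -> T -> R) : Prop :=
  [/\ (forall x y, 0 <= f x y),
      (forall x y, f x y = f y x),
      (forall x y, f x y = 0 <-> x = y)
    & (forall x y z, f x z <= f x y + f y z)].

(* Points of R^d, d = \sum_l d_l, viewed as row vectors; the l-th group of
   coordinates x^(l) \in R^(d_l) is the l-th column block [submxrow x l]. *)
Definition Rdpoint (R : realType) (L : nat) (dl : 'I_L -> nat) :=
  'rV[R]_(\sum_(l < L) dl l).

Definition block (R : realType) (L : nat) (dl : 'I_L -> nat)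
  (x : Rdpoint R dl) (l : 'I_L) : 'rV[R]_(dl l) :=
  @submxrow R L dl 1 x l.

(* A discrete probability measure  mu = \sum_{i<n} a_i delta_{x_i}  on a type P. *)
Record dpm (R : realType) (P : Type) := DPM {
  npts : nat;
  wt : 'I_npts -> R;
  pt : 'I_npts -> P;
  wt_ge0 : forall i, 0 <= wt i;
  wt_sum1 : \sum_(i < npts) wt i = 1 }.
Arguments wt {R P} d _.
Arguments pt {R P} d _.

Definition dpm_meas (R : realType) (P : Type) (mu : dpm R P) (A : set P) : R :=
  \sum_(i < npts mu | pt mu i \in A) wt mu i.

Definition dpm_eq (R : realType) (P : Type) (mu nu : dpm R P) : Prop :=
  forall A : set P, dpm_meas mu A = dpm_meas nu A.

Definition coupling (R : realType) (P : Type) (mu nu : dpm R P)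
  (Pi : 'M[R]_(npts mu, npts nu)) : Prop :=
  [/\ (forall i j, 0 <= Pi i j),
      (forall i, \sum_(j < npts nu) Pi i j = wt mu i)
    & (forall j, \sum_(i < npts mu) Pi i j = wt nu j)].
Arguments coupling {R P} mu nu Pi.

Definition simplex (R : realType) (L : nat) (al : 'I_L -> R) : Prop :=
  (forall l, 0 <= al l) /\ \sum_(l < L) al l = 1.

Definition frwd_cost (R : realType) (L : nat) (dl : 'I_L -> nat)
  (dist : forall l : 'I_L, 'rV[R]_(dl l) -> 'rV[R]_(dl l) -> R) (p : R)
  (mu nu : dpm R (Rdpoint R dl)) (Pi : 'M[R]_(npts mu, npts nu))
  (al : 'I_L -> R) : R :=
  \sum_(i < npts mu) \sum_(j < npts nu)
     Pi i j * \sum_(l < L) al l *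
        powR (dist l (block (pt mu i) l) (block (pt nu j) l)) p.

(* FRWD_p(mu,nu) = ( min_{Pi in U} max_{alpha in Sigma^L} cost )^(1/p);
   min/max (which are attained) are written as inf/sup. *)
Definition FRWD (R : realType) (L : nat) (dl : 'I_L -> nat)
  (dist : forall l : 'I_L, 'rV[R]_(dl l) -> 'rV[R]_(dl l) -> R) (p : R)
  (mu nu : dpm R (Rdpoint R dl)) : R :=
  powR
    (inf [set c | exists2 Pi, coupling mu nu Pi &
           c = sup [set v | exists2 al, simplex al &
                      v = frwd_cost dist p Pi al]])
    p^-1.

(* Main.v *)
Require Import Defs.
From HB Require Import structures.
From mathcomp Require Import all_boot all_order all_algebra.
From mathcomp Require Import all_classical all_reals all_analysis.
From mathcomp Require Import ring lra.
Import Order.TTheory GRing.Theory Num.Theory.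
Set Implicit Arguments. Unset Strict Implicit. Unset Printing Implicit Defensive.
Local Open Scope classical_set_scope.
Local Open Scope ring_scope.

Section Gen.
Context {R : realType}.

Lemma powRVl (A p : R) : 0 < A -> powR A^-1 p = (powR A p)^-1.
Proof.
move=> A0.
have h : powR A^-1 p * powR A p = 1.
  by rewrite -powRM ?invr_ge0 ?ltW // mulVf ?gt_eqF // powR1.
have nz : powR A p != 0 by rewrite gt_eqF // powR_gt0.
by rewrite -[LHS](mulfK nz) h div1r.
Qed.

Lemma conv_pt (p A B u v : R) : 1 <= p -> 0 < A -> 0 < B -> 0 <= u -> 0 <= v ->
  powR (u + v) p <=
    powR (A + B) p * (A / (A + B)) / powR A p * powR u p +
    powR (A + B) p * (B / (A + B)) / powR B p * powR v p.
Proof.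
move=> p1 A0 B0 u0 v0.
have AB0 : 0 < A + B by rewrite addr_gt0.
have l0 : 0 <= A / (A + B) by rewrite divr_ge0 // ltW.
have l1 : A / (A + B) <= 1 by rewrite ler_pdivrMr // mul1r lerDl ltW.
pose t := Itv01 l0 l1.
have := @convex_powR R p p1 t (u / A) (v / B).
have hu : 0 <= u / A by rewrite divr_ge0 // ltW.
have hv : 0 <= v / B by rewrite divr_ge0 // ltW.
move=> /(_ _ _) H0.
have := H0 ltac:(by rewrite inE /= in_itv /= andbT) ltac:(by rewrite inE /= in_itv /= andbT).
clear H0.
rewrite !convRE /= /unstable.onem.
have Eo : 1 - A / (A + B) = B / (A + B).
  by field; rewrite gt_eqF.
rewrite Eo.
have E : A / (A + B) * (u / A) + B / (A + B) * (v / B) = (u + v) / (A + B).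
  by field; rewrite !gt_eqF.
move=> H.
have H' : powR ((u+v)/(A+B)) p <= A/(A+B) * powR (u/A) p + B/(A+B) * powR (v/B) p.
  by move: H; rewrite -E [conv _ _ _]convRE /= /unstable.onem Eo.
clear H.
have -> : u + v = (A + B) * ((u + v) / (A + B)) by field; rewrite gt_eqF.
rewrite powRM; last 2 first.
- exact: ltW.
- by rewrite divr_ge0 ?addr_ge0 // ltW.
apply: (le_trans (ler_wpM2l (powR_ge0 _ _) H')).
rewrite !powRM ?invr_ge0 ?(ltW A0) ?(ltW B0) // !powRVl //.
have a0 : powR A p != 0 by rewrite gt_eqF // powR_gt0.
have b0 : powR B p != 0 by rewrite gt_eqF // powR_gt0.
rewrite le_eqVlt; apply/orP; left; apply/eqP.
rewrite mulrDr; congr (_ + _); field; by rewrite ?a0 ?b0 gt_eqF.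
Qed.
End Gen.

Section Main.
Unset Implicit Arguments.
Context (R : realType) (L : nat) (dl : 'I_L -> nat)
  (dist : forall l : 'I_L, 'rV[R]_(dl l) -> 'rV[R]_(dl l) -> R) (p : R).
Context (L0 : (0 < L)%N) (hd : forall l, is_metric (dist l)) (p1 : 1 <= p).
Set Implicit Arguments.

Local Notation P := (Rdpoint R dl).
Local Notation cost := (frwd_cost dist p).

Definition DD l (x y : P) := powR (dist l (block x l) (block y l)) p.

Lemma DD_ge0 l x y : 0 <= DD l x y.
Proof. exact: powR_ge0. Qed.

Definition costs (mu nu : dpm R P) (Pi : 'M[R]_(npts mu, npts nu)) :=
  [set v | exists2 al : 'I_L -> R, simplex al & v = cost Pi al].
Definition G (mu nu : dpm R P) (Pi : 'M[R]_(npts mu, npts nu)) :=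
  sup (costs Pi).
Definition CS (mu nu : dpm R P) :=
  [set c | exists2 Pi, coupling mu nu Pi & c = G Pi].

Lemma FRWDE (mu nu : dpm R P) : FRWD dist p mu nu = powR (inf (CS mu nu)) p^-1.
Proof. by []. Qed.

Lemma simplex_le1 (al : 'I_L -> R) : simplex al -> forall l : 'I_L, al l <= 1.
Proof.
move=> [h0 h1] l; rewrite -h1 (bigD1 l) //= lerDl sumr_ge0 //.
Qed.

Lemma cost_ge0 (mu nu : dpm R P) (Pi : 'M[R]_(npts mu, npts nu)) (al : 'I_L -> R) :
  coupling mu nu Pi -> simplex al -> 0 <= cost Pi al.
Proof.
move=> [c0 _ _] [a0 _]; apply: sumr_ge0 => i _; apply: sumr_ge0 => j _.
by apply: mulr_ge0 => //; apply: sumr_ge0 => l _; apply: mulr_ge0 => //; apply: powR_ge0.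
Qed.

Definition MM (mu nu : dpm R P) (Pi : 'M[R]_(npts mu, npts nu)) :=
  \sum_i \sum_j Pi i j * \sum_(l < L) DD l (pt mu i) (pt nu j).

Lemma cost_le (mu nu : dpm R P) (Pi : 'M[R]_(npts mu, npts nu)) (al : 'I_L -> R) :
  coupling mu nu Pi -> simplex al -> cost Pi al <= MM Pi.
Proof.
move=> [c0 _ _] sa; apply: ler_sum => i _; apply: ler_sum => j _.
apply: ler_wpM2l => //; apply: ler_sum => l _.
by apply: ler_piMl; [apply: powR_ge0 | apply: simplex_le1].
Qed.

Definition l0 : 'I_L := Ordinal L0.

Lemma e0_simplex : simplex (fun l : 'I_L => (l == l0)%:R : R).
Proof.
split=> [l|]; first by rewrite ler0n.
rewrite (bigD1 l0) //= ?eqxx big1 ?addr0 // => l /negbTE -> //.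

Qed.

Lemma costs_ne (mu nu : dpm R P) (Pi : 'M[R]_(npts mu, npts nu)) : costs Pi !=set0.
Proof. by exists (cost Pi (fun l : 'I_L => (l == l0)%:R : R)); exists (fun l : 'I_L => (l == l0)%:R : R) => //; exact: e0_simplex. Qed.

Lemma costs_sup (mu nu : dpm R P) (Pi : 'M[R]_(npts mu, npts nu)) :
  coupling mu nu Pi -> has_sup (costs Pi).
Proof.
move=> cp; split; first exact: costs_ne.
by exists (MM Pi) => v [al sa ->]; apply: cost_le.
Qed.

Lemma G_ub (mu nu : dpm R P) (Pi : 'M[R]_(npts mu, npts nu)) (al : 'I_L -> R) :
  coupling mu nu Pi -> simplex al -> cost Pi al <= G Pi.
Proof.
move=> cp sa; apply: (sup_upper_bound (costs_sup cp)); by exists al.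
Qed.

Lemma G_le (mu nu : dpm R P) (Pi : 'M[R]_(npts mu, npts nu)) B :
  (forall al, simplex al -> cost Pi al <= B) -> G Pi <= B.
Proof.
move=> h; apply: ge_sup; first exact: costs_ne.
by move=> v [al sa ->]; apply: h.
Qed.

Lemma G_ge0 (mu nu : dpm R P) (Pi : 'M[R]_(npts mu, npts nu)) :
  coupling mu nu Pi -> 0 <= G Pi.
Proof.
move=> cp; apply: le_trans (G_ub cp e0_simplex); exact: cost_ge0 cp e0_simplex.
Qed.

Lemma prod_coupling (mu nu : dpm R P) :
  coupling mu nu (\matrix_(i, j) (wt mu i * wt nu j)).
Proof.
split=> [i j|i|j]; rewrite ?mxE.
- by apply: mulr_ge0; apply: wt_ge0.
- under eq_bigr do rewrite mxE. by rewrite -mulr_sumr wt_sum1 mulr1.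
- under eq_bigr do rewrite mxE. by rewrite -mulr_suml wt_sum1 mul1r.
Qed.

Lemma CS_ne (mu nu : dpm R P) : CS mu nu !=set0.
Proof. by exists (G (\matrix_(i, j) (wt mu i * wt nu j))); eexists; first exact: prod_coupling. Qed.

Lemma CS_inf (mu nu : dpm R P) : has_inf (CS mu nu).
Proof.
split; first exact: CS_ne.
by exists 0 => c [Pi cp ->]; apply: G_ge0.
Qed.

Lemma I_ge0 (mu nu : dpm R P) : 0 <= inf (CS mu nu).
Proof. by apply: lb_le_inf; [exact: CS_ne | move=> c [Pi cp ->]; apply: G_ge0]. Qed.

Lemma I_le (mu nu : dpm R P) (Pi : 'M[R]_(npts mu, npts nu)) :
  coupling mu nu Pi -> inf (CS mu nu) <= G Pi.
Proof. by move=> cp; apply: (ge_inf (CS_inf mu nu).2); exists Pi. Qed.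

Lemma I_lt (mu nu : dpm R P) x : inf (CS mu nu) < x ->
  exists2 Pi : 'M[R]_(npts mu, npts nu), coupling mu nu Pi & G Pi < x.
Proof.
move=> /(inf_lt (CS_ne mu nu)) [c [Pi cp ->] h]; by exists Pi.
Qed.


Lemma dist_sym l x y : dist l x y = dist l y x.
Proof. by case: (hd l). Qed.
Lemma dist_ge0 l x y : 0 <= dist l x y.
Proof. by case: (hd l). Qed.
Lemma dist_tri l x y z : dist l x z <= dist l x y + dist l y z.
Proof. by case: (hd l). Qed.
Lemma dist_eq0 l x y : dist l x y = 0 <-> x = y.
Proof. by case: (hd l). Qed.

Lemma cost_tr (mu nu : dpm R P) (Pi : 'M[R]_(npts mu, npts nu)) (al : 'I_L -> R) :
  cost (trmx Pi) al = cost Pi al.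
Proof.
rewrite /frwd_cost exchange_big; apply: eq_bigr => i _; apply: eq_bigr => j _.
rewrite mxE; congr (_ * _); apply: eq_bigr => l _; by rewrite dist_sym.
Qed.

Lemma coupling_tr (mu nu : dpm R P) (Pi : 'M[R]_(npts mu, npts nu)) :
  coupling mu nu Pi -> coupling nu mu (trmx Pi).
Proof.
move=> [c0 c1 c2]; split=> [i j|i|j]; rewrite ?mxE //.
- by under eq_bigr do rewrite mxE; rewrite c2.
- by under eq_bigr do rewrite mxE; rewrite c1.
Qed.

Lemma G_tr (mu nu : dpm R P) (Pi : 'M[R]_(npts mu, npts nu)) :
  G (trmx Pi) = G Pi.
Proof.
rewrite /G; congr sup; apply/seteqP; split => v [al sa ->]; exists al => //;
  by rewrite cost_tr.
Qed.

Lemma CS_sub (mu nu : dpm R P) : CS mu nu `<=` CS nu mu.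
Proof.
move=> c [Pi cp ->]; exists (trmx Pi); first exact: coupling_tr.
by rewrite G_tr.
Qed.

Lemma I_sym (mu nu : dpm R P) : inf (CS mu nu) = inf (CS nu mu).
Proof. by congr inf; apply/seteqP; split; apply: CS_sub. Qed.


Lemma divK_aux (x b : R) : (b = 0 -> x = 0) -> x * b / b = x.
Proof.
move=> h; have [b0|b0] := eqVneq b 0; first by rewrite (h b0) !mul0r.
by rewrite mulfK.
Qed.

Lemma divK_aux2 (x b : R) : (b = 0 -> x = 0) -> b * x / b = x.
Proof. by move=> h; rewrite [b * x]mulrC divK_aux. Qed.

Definition glue (mu nu eta : dpm R P) (P1 : 'M[R]_(npts mu, npts nu))
  (P2 : 'M[R]_(npts nu, npts eta)) : 'M[R]_(npts mu, npts eta) :=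
  \matrix_(i, k) \sum_j P1 i j * P2 j k / wt nu j.

Lemma glue_coupling (mu nu eta : dpm R P) (P1 : 'M[R]_(npts mu, npts nu))
  (P2 : 'M[R]_(npts nu, npts eta)) :
  coupling mu nu P1 -> coupling nu eta P2 -> coupling mu eta (glue P1 P2).
Proof.
move=> [a0 a1 a2] [b0 b1 b2].
have z1 i j : wt nu j = 0 -> P1 i j = 0.
  by move=> h; move: (a2 j); rewrite h => /psumr_eq0P; apply => // ? _.
have z2 j k : wt nu j = 0 -> P2 j k = 0.
  by move=> h; move: (b1 j); rewrite h => /psumr_eq0P; apply => // ? _.
split=> [i k|i|k]; rewrite /glue.
- rewrite mxE; apply: sumr_ge0 => j _; apply: divr_ge0; [exact: mulr_ge0|exact: wt_ge0].
- under eq_bigr do rewrite mxE. rewrite exchange_big /= -a1; apply: eq_bigr => j _.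
  by rewrite -big_distrl -big_distrr /= b1 divK_aux //; apply: z1.
- under eq_bigr do rewrite mxE. rewrite exchange_big /= -b2; apply: eq_bigr => j _.
  by rewrite -!big_distrl /= a2 divK_aux2 //; apply: z2.
Qed.

Lemma glue_cost (mu nu eta : dpm R P) (P1 : 'M[R]_(npts mu, npts nu))
  (P2 : 'M[R]_(npts nu, npts eta)) (al : 'I_L -> R) (A B : R) :
  coupling mu nu P1 -> coupling nu eta P2 -> simplex al -> 0 < A -> 0 < B ->
  cost P1 al <= powR A p -> cost P2 al <= powR B p ->
  cost (glue P1 P2) al <= powR (A + B) p.
Proof.
move=> c1 c2 sa A0 B0 h1 h2.
have [a0 a1 a2] := c1; have [b0 b1 b2] := c2.
have z1 i j : wt nu j = 0 -> P1 i j = 0.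
  by move=> h; move: (a2 j); rewrite h => /psumr_eq0P; apply => // ? _.
have z2 j k : wt nu j = 0 -> P2 j k = 0.
  by move=> h; move: (b1 j); rewrite h => /psumr_eq0P; apply => // ? _.
set K1 := powR (A + B) p * (A / (A + B)) / powR A p.
set K2 := powR (A + B) p * (B / (A + B)) / powR B p.
have AB0 : 0 < A + B by rewrite addr_gt0.
have K10 : 0 <= K1 by rewrite /K1 !mulr_ge0 ?invr_ge0 ?powR_ge0 ?divr_ge0 ?ltW.
have K20 : 0 <= K2 by rewrite /K2 !mulr_ge0 ?invr_ge0 ?powR_ge0 ?divr_ge0 ?ltW.
pose X i j := \sum_(l < L) al l * powR (dist l (block (pt mu i) l) (block (pt nu j) l)) p.
pose Y j k := \sum_(l < L) al l * powR (dist l (block (pt nu j) l) (block (pt eta k) l)) p.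
pose w i j k := P1 i j * P2 j k / wt nu j.
have w0 i j k : 0 <= w i j k.
  by rewrite /w divr_ge0 ?mulr_ge0 ?wt_ge0.
have step1 : cost (glue P1 P2) al <=
   \sum_i \sum_k \sum_j w i j k * (K1 * X i j + K2 * Y j k).
  rewrite /frwd_cost; apply: ler_sum => i _; apply: ler_sum => k _.
  rewrite /glue mxE big_distrl /=; apply: ler_sum => j _.
  apply: ler_wpM2l; first exact: w0.
  rewrite /X /Y !mulr_sumr -big_split /=; apply: ler_sum => l _.
  rewrite mulrCA [K2 * _]mulrCA -mulrDr; apply: ler_wpM2l; first by case: sa.
  have := conv_pt p1 A0 B0 (@dist_ge0 l (block (pt mu i) l) (block (pt nu j) l))
    (@dist_ge0 l (block (pt nu j) l) (block (pt eta k) l)).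
  rewrite -/K1 -/K2 => Hc; apply: (le_trans _ Hc).
  apply: ge0_ler_powR; rewrite ?nnegrE ?dist_ge0 ?addr_ge0 ?dist_ge0 //.
  - exact: le_trans p1.
  - exact: dist_tri.
have S1 : \sum_i \sum_k \sum_j w i j k * X i j = cost P1 al.
  rewrite /frwd_cost; apply: eq_bigr => i _; rewrite exchange_big /=.
  apply: eq_bigr => j _; rewrite -big_distrl /=; congr (_ * _).
  rewrite /w -big_distrl -big_distrr /= b1 divK_aux //; exact: z1.
have S2 : \sum_i \sum_k \sum_j w i j k * Y j k = cost P2 al.
  rewrite exchange_big /=.
  under eq_bigr do rewrite exchange_big /=.
  rewrite exchange_big /= /frwd_cost; apply: eq_bigr => j _; apply: eq_bigr => k _.
  rewrite -big_distrl /=; congr (_ * _).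
  rewrite /w -!big_distrl /= a2 divK_aux2 //; exact: z2.
apply: (le_trans step1).
have -> : \sum_i \sum_k \sum_j w i j k * (K1 * X i j + K2 * Y j k) =
    K1 * (\sum_i \sum_k \sum_j w i j k * X i j) +
    K2 * (\sum_i \sum_k \sum_j w i j k * Y j k).
  rewrite !mulr_sumr -big_split; apply: eq_bigr => i _.
  rewrite !mulr_sumr -big_split; apply: eq_bigr => k _.
  rewrite !mulr_sumr -big_split; apply: eq_bigr => j _.
  by rewrite /= mulrDr [w i j k * (K1 * _)]mulrCA [w i j k * (K2 * _)]mulrCA.
rewrite S1 S2.
apply: le_trans (_ : K1 * powR A p + K2 * powR B p <= _).
  by apply: lerD; apply: ler_wpM2l.
have a0' : powR A p != 0 by rewrite gt_eqF // powR_gt0.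
have b0' : powR B p != 0 by rewrite gt_eqF // powR_gt0.
rewrite le_eqVlt; apply/orP; left; apply/eqP.
rewrite /K1 /K2 !divfK //; field; by rewrite gt_eqF.
Qed.


Lemma blocks_eq (x y : P) : (forall l, block x l = block y l) -> x = y.
Proof.
by move=> h; rewrite -[x]submxrowK -[y]submxrowK; apply: eq_mxrow.
Qed.

Lemma divK_aux3 (x b : R) : (b = 0 -> x = 0) -> x / b * b = x.
Proof. by move=> h; rewrite mulrAC divK_aux. Qed.

Lemma divK_aux4 (x b : R) : (b = 0 -> x = 0) -> b * (x / b) = x.
Proof. by move=> h; rewrite mulrC divK_aux3. Qed.

Lemma meas_ge0 (mu : dpm R P) A : 0 <= dpm_meas mu A.
Proof. by apply: sumr_ge0 => i _; apply: wt_ge0. Qed.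

Lemma meas1E (mu : dpm R P) x :
  dpm_meas mu [set x] = \sum_(i | pt mu i == x) wt mu i.
Proof. by apply: eq_bigl => i; rewrite in_set1. Qed.

Lemma wt_le_meas1 (mu : dpm R P) i : wt mu i <= dpm_meas mu [set pt mu i].
Proof.
rewrite meas1E (bigD1 i) //= lerDl; apply: sumr_ge0 => ? _; exact: wt_ge0.
Qed.

Definition Zc (mu nu : dpm R P) : 'M[R]_(npts mu, npts nu) :=
  \matrix_(i, j) if pt mu i == pt nu j then
     wt mu i * wt nu j / dpm_meas mu [set pt mu i] else 0.

Lemma Zc_coupling (mu nu : dpm R P) : dpm_eq mu nu -> coupling mu nu (Zc mu nu).
Proof.
move=> E; split=> [i j|i|j]; rewrite /Zc.
- rewrite mxE; case: ifP => // _.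
  by rewrite divr_ge0 ?mulr_ge0 ?wt_ge0 ?meas_ge0.
- under eq_bigr do rewrite mxE.
  rewrite -big_mkcond /=.
  under eq_bigr do rewrite mulrAC.
  rewrite -big_distrr /=.
  have -> : \sum_(j < npts nu | pt mu i == pt nu j) wt nu j = dpm_meas mu [set pt mu i].
    by rewrite E meas1E; apply: eq_bigl => j; rewrite eq_sym.
  apply: divK_aux3 => h; apply/eqP; rewrite eq_le wt_ge0 andbT -h.
  exact: wt_le_meas1.
- under eq_bigr => i _ do rewrite mxE.
  have -> : \sum_(i < npts mu) (if pt mu i == pt nu j then
     wt mu i * wt nu j / dpm_meas mu [set pt mu i] else 0) =
     \sum_(i < npts mu | pt mu i == pt nu j) wt mu i * (wt nu j / dpm_meas mu [set pt nu j]).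
    rewrite [RHS]big_mkcond; apply: eq_bigr => i _; case: eqP => [->|] //.
    by rewrite mulrA.
  rewrite -big_distrl /= -meas1E.
  apply: divK_aux4 => h; apply/eqP; rewrite eq_le wt_ge0 andbT.
  by rewrite -h E; exact: wt_le_meas1.
Qed.

Lemma p_neq0 : p != 0.
Proof. by rewrite gt_eqF // (lt_le_trans ltr01 p1). Qed.

Lemma Zc_cost (mu nu : dpm R P) (al : 'I_L -> R) : cost (Zc mu nu) al = 0.
Proof.
apply: big1 => i _; apply: big1 => j _; rewrite /Zc mxE.
case: eqP => [e|_]; last by rewrite mul0r.
rewrite big1 ?mulr0 // => l _; rewrite e.
by rewrite (proj2 (dist_eq0 _ _)) // powR0 ?mulr0 // p_neq0.
Qed.

Lemma zero_of_eq (mu nu : dpm R P) : dpm_eq mu nu -> FRWD dist p mu nu = 0.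
Proof.
move=> E; rewrite FRWDE.
have I0 : inf (CS mu nu) = 0.
  apply/eqP; rewrite eq_le I_ge0 andbT.
  apply: le_trans (I_le (Zc_coupling E)) _.
  by apply: G_le => al _; rewrite Zc_cost.
by rewrite I0 powR0 // invr_eq0 p_neq0.
Qed.


Lemma le_sum_term (I : finType) (F : I -> R) i0 :
  (forall i, 0 <= F i) -> F i0 <= \sum_i F i.
Proof. by move=> h; rewrite (bigD1 i0) //= lerDl sumr_ge0. Qed.

Lemma measE (mu : dpm R P) A :
  dpm_meas mu A = \sum_i (pt mu i \in A)%:R * wt mu i.
Proof.
rewrite /dpm_meas big_mkcond; apply: eq_bigr => i _.
by case: (pt mu i \in A); rewrite ?mul1r ?mul0r.
Qed.

Lemma eq_of_zero (mu nu : dpm R P) : FRWD dist p mu nu = 0 -> dpm_eq mu nu.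
Proof.
rewrite FRWDE => /powR_eq0_eq0 I0 A.
pose c i j := \sum_(l < L) DD l (pt mu i) (pt nu j).
pose K := \sum_i \sum_j (c i j)^-1.
have c0 i j : 0 <= c i j by apply: sumr_ge0 => l _; apply: DD_ge0.
have K0 : 0 <= K by apply: sumr_ge0 => i _; apply: sumr_ge0 => j _; rewrite invr_ge0.
have cK i j : (c i j)^-1 <= K.
  apply: (@le_trans _ _ (\sum_j (c i j)^-1)).
    by apply: le_sum_term => j'; rewrite invr_ge0.
  rewrite /K; apply: (@le_sum_term _ (fun i => \sum_j (c i j)^-1) i).
  by move=> i'; apply: sumr_ge0 => j' _; rewrite invr_ge0.
have ceq i j : c i j = 0 -> pt mu i = pt nu j.
  move=> /psumr_eq0P h; apply: blocks_eq => l.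
  apply/(dist_eq0 _ _); apply: (@powR_eq0_eq0 _ _ p); apply: h => // l' _.
  exact: DD_ge0.
have L0r : (L%:R : R) != 0 by rewrite pnatr_eq0 -lt0n.
have Lgt0 : 0 < (L%:R : R) by rewrite ltr0n.
pose u := fun _ : 'I_L => (L%:R : R)^-1.
have su : simplex u.
  split=> [l|]; first by rewrite invr_ge0 ler0n.
  by rewrite sumr_const card_ord -(mulr_natl ((L%:R : R)^-1)) mulfV.
apply/eqP; rewrite -subr_eq0 -normr_le0; apply/ler_addgt0Pr => e e0.
rewrite add0r.
pose eps := e / (L%:R * K + 1).
have LK1 : 0 < L%:R * K + 1 by rewrite ltr_wpDl // mulr_ge0 // ler0n.
have eps0 : 0 < eps by rewrite divr_gt0.
have [Pi cp GPi] := I_lt (x := eps) (mu := mu) (nu := nu) ltac:(by rewrite I0).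
have [a0 a1 a2] := cp.
have Hc : \sum_i \sum_j Pi i j * c i j <= L%:R * eps.
  have -> : \sum_i \sum_j Pi i j * c i j = L%:R * cost Pi u.
    rewrite /frwd_cost mulr_sumr; apply: eq_bigr => i _.
    rewrite mulr_sumr; apply: eq_bigr => j _.
    by rewrite -mulr_sumr [RHS]mulrCA [L%:R * (L%:R^-1 * _)]mulrA mulfV // mul1r.
  rewrite ler_pM2l //; apply: ltW; exact: le_lt_trans (G_ub cp su) GPi.
have Ediff : dpm_meas mu A - dpm_meas nu A =
    \sum_i \sum_j Pi i j * ((pt mu i \in A)%:R - (pt nu j \in A)%:R).
  rewrite !measE.
  have -> : \sum_i (pt nu i \in A)%:R * wt nu i =
            \sum_i \sum_j Pi i j * (pt nu j \in A)%:R.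
    rewrite exchange_big /=; apply: eq_bigr => j _.
    by rewrite -a2 mulr_sumr; apply: eq_bigr => i _; rewrite mulrC.
  rewrite -sumrB; apply: eq_bigr => i _.
  rewrite -a1 mulr_sumr -sumrB; apply: eq_bigr => j _.
  by rewrite mulrBr mulrC.
rewrite Ediff.
apply: (le_trans (ler_norm_sum _ _ _)).
apply: (@le_trans _ _ (\sum_i \sum_j Pi i j * (c i j * K))).
  apply: ler_sum => i _; apply: (le_trans (ler_norm_sum _ _ _)).
  apply: ler_sum => j _; rewrite normrM ger0_norm //; apply: ler_wpM2l => //.
  have [/eqP|cn0] := eqVneq (c i j) 0.
    by move=> /eqP/ceq ->; rewrite subrr normr0 mulr_ge0.
  apply: (@le_trans _ _ 1).
    by case: (pt mu i \in A); case: (pt nu j \in A); rewrite ?subrr ?normr0 ?subr0 ?sub0r ?normrN ?normr1.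
  apply: (@le_trans _ _ (c i j * (c i j)^-1)); first by rewrite mulfV.
  by apply: ler_wpM2l.
have -> : \sum_i \sum_j Pi i j * (c i j * K) = K * \sum_i \sum_j Pi i j * c i j.
  rewrite mulr_sumr; apply: eq_bigr => i _; rewrite mulr_sumr; apply: eq_bigr => j _.
  by rewrite mulrA mulrC.
apply: (le_trans (ler_wpM2l K0 Hc)).
have -> : K * (L%:R * eps) = (L%:R * K) / (L%:R * K + 1) * e.
  by rewrite /eps; field; rewrite gt_eqF.
apply: ler_piMl; first exact: ltW.
by rewrite ler_pdivrMr // mul1r lerDl.
Qed.


Lemma powRpq x : 0 <= x -> powR (powR x p^-1) p = x.
Proof. by move=> x0; rewrite -powRrM mulVf ?p_neq0 // powRr1. Qed.

Lemma powRqp x : 0 <= x -> powR (powR x p) p^-1 = x.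
Proof. by move=> x0; rewrite -powRrM mulfV ?p_neq0 // powRr1. Qed.

Lemma tri (mu nu eta : dpm R P) :
  FRWD dist p mu eta <= FRWD dist p mu nu + FRWD dist p nu eta.
Proof.
rewrite !FRWDE.
set a := powR (inf (CS mu nu)) p^-1.
set b := powR (inf (CS nu eta)) p^-1.
have p0 : 0 < p by rewrite (lt_le_trans ltr01 p1).
apply/ler_addgt0Pr => e e0.
pose d := e / 2.
have d0 : 0 < d by rewrite divr_gt0.
have a0 : 0 <= a by apply: powR_ge0.
have b0 : 0 <= b by apply: powR_ge0.
have A0 : 0 < a + d by rewrite ltr_wpDl.
have B0 : 0 < b + d by rewrite ltr_wpDl.
have hA : inf (CS mu nu) < powR (a + d) p.
  rewrite -{1}(powRpq (I_ge0 mu nu)) -/a.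
  by apply: gt0_ltr_powR => //; [rewrite nnegrE; exact: ltW | rewrite ltrDl].
have hB : inf (CS nu eta) < powR (b + d) p.
  rewrite -{1}(powRpq (I_ge0 nu eta)) -/b.
  by apply: gt0_ltr_powR => //; [rewrite nnegrE; exact: ltW | rewrite ltrDl].
have [P1 cp1 G1] := I_lt hA.
have [P2 cp2 G2] := I_lt hB.
have G3 : G (glue P1 P2) <= powR ((a + d) + (b + d)) p.
  apply: G_le => al sa; apply: (glue_cost cp1 cp2 sa A0 B0).
  - exact: le_trans (G_ub cp1 sa) (ltW G1).
  - exact: le_trans (G_ub cp2 sa) (ltW G2).
have I3 := le_trans (I_le (glue_coupling cp1 cp2)) G3.
have q0 : 0 <= p^-1 by rewrite invr_ge0 ltW.
have := @ge0_ler_powR _ p^-1 q0 _ _ (I_ge0 mu eta) _ I3.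
rewrite powRqp; last by rewrite addr_ge0 // ltW.
move=> h; have {}h := h ltac:(by rewrite nnegrE powR_ge0).
apply: (le_trans h).
have -> : a + d + (b + d) = a + b + e by rewrite /d; field.
by [].
Qed.

Theorem proposition1_aux :
  [/\ (forall mu nu : dpm R P, 0 <= FRWD dist p mu nu),
      (forall mu nu : dpm R P, FRWD dist p mu nu = FRWD dist p nu mu),
      (forall mu nu : dpm R P, FRWD dist p mu nu = 0 <-> dpm_eq mu nu)
    & (forall mu nu eta : dpm R P,
         FRWD dist p mu eta <= FRWD dist p mu nu + FRWD dist p nu eta)].
Proof.
split.
- by move=> mu nu; apply: powR_ge0.
- by move=> mu nu; rewrite !FRWDE I_sym.
- move=> mu nu; split; [exact: eq_of_zero | exact: zero_of_eq].
- exact: tri.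
Qed.

End Main.

Unset Implicit Arguments.

Theorem proposition1 (R : realType) (L : nat) (dl : 'I_L -> nat)
  (dist : forall l : 'I_L, 'rV[R]_(dl l) -> 'rV[R]_(dl l) -> R) (p : R) :
  (0 < L)%N ->
  (forall l, is_metric (dist l)) ->
  1 <= p ->
  [/\ (forall mu nu : dpm R (Rdpoint R dl), 0 <= FRWD dist p mu nu),
      (forall mu nu : dpm R (Rdpoint R dl), FRWD dist p mu nu = FRWD dist p nu mu),
      (forall mu nu : dpm R (Rdpoint R dl), FRWD dist p mu nu = 0 <-> dpm_eq mu nu)
    & (forall mu nu eta : dpm R (Rdpoint R dl),
         FRWD dist p mu eta <= FRWD dist p mu nu + FRWD dist p nu eta)].
Proof. move=> L0 hd p1; exact: (@proposition1_aux R L dl dist p L0 hd p1). Qed.
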